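(* Let $n,m$ be positive integers. If both $n$ and $m$ are even, then $\chi'_{m\Sigma}(K_{n,m})=4$ if $n=m=2$, $\chi'_{m\Sigma}(K_{n,m})=3$ if $n=m\ge 4$, and $\chi'_{m\Sigma}(K_{n,m})=2$ if $n\ne m$. If at least one of $n,m$ is odd and $n,m\ge 2$, then $\chi'_{m\Sigma}(K_{n,m})=5$ if $n=m=3$, $\chi'_{m\Sigma}(K_{n,m})=4$ if $n=m=5$, and $\chi'_{m\Sigma}(K_{n,m})=3$ otherwise.
   Context: A $k$-edge-coloring of $G$ is any map $c:E(G)\to\{1,\dots,k\}$ (adjacent edges may share colors). It induces $\sigma_c(v)=\sum_{u\in N(v)}c(vu)$. The coloring is neighbor sum distinguishing (NSD) if $\sigma_c(u)\ne\sigma_c(v)$ for every edge $uv$. It is majority if every vertex $v$ is incident to at most $d(v)/2$ edges of each single color. $\chi'_{m\Sigma}(G)$ denotes the least $k$ such that $G$ has a $k$-edge-coloring that is both majority and NSD. *)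

(* Defs.v *)
From mathcomp Require Import all_boot.
Set Implicit Arguments. Unset Strict Implicit. Unset Printing Implicit Defensive.

(* A simple graph: a finite vertex type T with a symmetric irreflexive
   adjacency relation adj. An edge coloring is c : T -> T -> nat, where
   c u v is the color of the edge uv (required symmetric on edges). *)

Definition is_edge_coloring (T : finType) (adj : rel T) (k : nat)
  (c : T -> T -> nat) : Prop :=
  forall u v, adj u v -> c u v = c v u /\ 1 <= c u v <= k.

Definition sigma (T : finType) (adj : rel T) (c : T -> T -> nat) (v : T) : nat :=
  \sum_(u | adj v u) c v u.

Definition is_NSD (T : finType) (adj : rel T) (c : T -> T -> nat) : Prop :=
  forall u v, adj u v -> sigma adj c u <> sigma adj c v.

Definition is_majority (T : finType) (adj : rel T) (c : T -> T -> nat) : Prop :=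
  forall (v : T) (a : nat),
    2 * #|[set u | adj v u && (c v u == a)]| <= #|[set u | adj v u]|.

Definition has_mNSD_coloring (T : finType) (adj : rel T) (k : nat) : Prop :=
  exists c : T -> T -> nat,
    [/\ is_edge_coloring adj k c, is_majority adj c & is_NSD adj c].

Definition chi_mSigma_eq (T : finType) (adj : rel T) (k : nat) : Prop :=
  has_mNSD_coloring adj k /\ forall k', k' < k -> ~ has_mNSD_coloring adj k'.

Arguments chi_mSigma_eq : clear implicits.
Definition Knm_adj (n m : nat) : rel ('I_n + 'I_m)%type :=
  fun x y => match x, y with
             | inl _, inr _ => true
             | inr _, inl _ => true
             | _, _ => false
             end.
Arguments Knm_adj : clear implicits.

(* Main.v *)
Require Import Defs.
From mathcomp Require Import all_boot.
From mathcomp Require Import zify.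
Set Implicit Arguments. Unset Strict Implicit. Unset Printing Implicit Defensive.


Definition rcnt (M : nat -> nat -> nat) m i a := count (fun j => M i j == a) (iota 0 m).
Definition ccnt (M : nat -> nat -> nat) n j a := count (fun i => M i j == a) (iota 0 n).
Definition rsum (M : nat -> nat -> nat) m i := sumn (map (M i) (iota 0 m)).
Definition csum (M : nat -> nat -> nat) n j := sumn (map (fun i => M i j) (iota 0 n)).

Lemma sum_ord_iota m (F : nat -> nat) : \sum_(j < m) F (nat_of_ord j) = sumn (map F (iota 0 m)).
Proof. by rewrite -(big_mkord xpredT F) /index_iota subn0 sumnE big_map. Qed.

Lemma card_ord_iota m (P : pred nat) : #|[set j : 'I_m | P j]| = count P (iota 0 m).
Proof.
rewrite -sum1dep_card (big_mkcond (fun j : 'I_m => P j)) /=.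
rewrite (sum_ord_iota m (fun j => if P j then 1 else 0)) -sumn_count.
by congr sumn; apply: eq_map => x; case: (P x).
Qed.

Definition Mof n m (c : ('I_n + 'I_m)%type -> ('I_n + 'I_m)%type -> nat) : nat -> nat -> nat :=
  fun i j => match insub i, insub j with
             | Some i', Some j' => c (inl i') (inr j')
             | _, _ => 0 end.

Definition cof n m (M : nat -> nat -> nat) : ('I_n + 'I_m)%type -> ('I_n + 'I_m)%type -> nat :=
  fun u v => match u, v with
             | inl i, inr j => M i j
             | inr j, inl i => M i j
             | _, _ => 0 end.

Definition GoodP k n m (M : nat -> nat -> nat) :=
  [/\ (forall i j, i < n -> j < m -> 1 <= M i j <= k),
      (forall i a, i < n -> 2 * rcnt M m i a <= m),
      (forall j a, j < m -> 2 * ccnt M n j a <= n) &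
      (forall i j, i < n -> j < m -> rsum M m i <> csum M n j)].

Lemma sigma_l n m (c : ('I_n + 'I_m)%type -> ('I_n + 'I_m)%type -> nat) (i : 'I_n) :
  sigma (Knm_adj n m) c (inl i) = \sum_(j < m) c (inl i) (inr j).
Proof. by rewrite /sigma big_sumType /= big_pred0 // add0n. Qed.

Lemma sigma_r n m (c : ('I_n + 'I_m)%type -> ('I_n + 'I_m)%type -> nat) (j : 'I_m) :
  sigma (Knm_adj n m) c (inr j) = \sum_(i < n) c (inr j) (inl i).
Proof. by rewrite /sigma big_sumType /= [X in _ + X]big_pred0 // addn0. Qed.

Lemma card_l n m (P : pred ('I_n + 'I_m)%type) (i : 'I_n) :
  #|[set u | Knm_adj n m (inl i) u && P u]| = #|[set j : 'I_m | P (inr j)]|.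
Proof.
rewrite -!sum1dep_card big_sumType /= big_pred0 // add0n.
Qed.

Lemma card_r n m (P : pred ('I_n + 'I_m)%type) (j : 'I_m) :
  #|[set u | Knm_adj n m (inr j) u && P u]| = #|[set i : 'I_n | P (inl i)]|.
Proof.
rewrite -!sum1dep_card big_sumType /= [X in _ + X]big_pred0 // addn0.
by apply: eq_bigl => x.
Qed.

Lemma Mof_ord n m c (i : 'I_n) (j : 'I_m) : Mof c i j = c (inl i) (inr j).
Proof. by rewrite /Mof !valK. Qed.

Lemma card_all m : #|[set j : 'I_m | true]| = m.
Proof. by rewrite (card_ord_iota m xpredT) count_predT size_iota. Qed.

Lemma deg_l n m (i : 'I_n) : #|[set u | Knm_adj n m (inl i) u]| = m.
Proof.
rewrite -sum1dep_card big_sumType /= big_pred0 // add0n sum1_card card_ord //.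
Qed.

Lemma deg_r n m (j : 'I_m) : #|[set u | Knm_adj n m (inr j) u]| = n.
Proof.
rewrite -sum1dep_card big_sumType /= [X in _ + X]big_pred0 // addn0 sum1_card card_ord //.
Qed.

Lemma rcnt_Mof n m c (i : 'I_n) a :
  rcnt (Mof c) m i a = #|[set j : 'I_m | c (inl i) (inr j) == a]|.
Proof.
rewrite /rcnt -(card_ord_iota m (fun j => Mof c i j == a)).
by apply: eq_card => j; rewrite !inE Mof_ord.
Qed.

Lemma ccnt_Mof n m c (j : 'I_m) a :
  ccnt (Mof c) n j a = #|[set i : 'I_n | c (inl i) (inr j) == a]|.
Proof.
rewrite /ccnt -(card_ord_iota n (fun i => Mof c i j == a)).
by apply: eq_card => i; rewrite !inE Mof_ord.
Qed.

Lemma rsum_Mof n m c (i : 'I_n) :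
  rsum (Mof c) m i = \sum_(j < m) c (inl i) (inr j).
Proof.
rewrite /rsum -(sum_ord_iota m (Mof c i)).
by apply: eq_bigr => j _; rewrite Mof_ord.
Qed.

Lemma csum_Mof n m c (j : 'I_m) :
  csum (Mof c) n j = \sum_(i < n) c (inl i) (inr j).
Proof.
rewrite /csum -(sum_ord_iota n (fun i => Mof c i j)).
by apply: eq_bigr => i _; rewrite Mof_ord.
Qed.

Lemma has_iff k n m : has_mNSD_coloring (Knm_adj n m) k <-> exists M, GoodP k n m M.
Proof.
split.
- case=> c [Hc Hm Hn]; exists (Mof c); split.
  + move=> i j hi hj; rewrite (Mof_ord c (Ordinal hi) (Ordinal hj)).
    by case: (Hc (inl (Ordinal hi)) (inr (Ordinal hj)) isT).
  + move=> i a hi; have := Hm (inl (Ordinal hi)) a.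
    by rewrite (card_l (fun u => c (inl (Ordinal hi)) u == a)) deg_l -rcnt_Mof.
  + move=> j a hj; have := Hm (inr (Ordinal hj)) a.
    rewrite (card_r (fun u => c (inr (Ordinal hj)) u == a)) deg_r (ccnt_Mof c (Ordinal hj)).
    rewrite (_ : [set x : 'I_n | c (inr (Ordinal hj)) (inl x) == a] = [set x : 'I_n | c (inl x) (inr (Ordinal hj)) == a]) //.
    by apply/setP => x; rewrite !inE; case: (Hc (inl x) (inr (Ordinal hj)) isT) => ->.
  + move=> i j hi hj.
    rewrite (rsum_Mof c (Ordinal hi)) (csum_Mof c (Ordinal hj)).
    have := Hn (inl (Ordinal hi)) (inr (Ordinal hj)) isT.
    rewrite sigma_l sigma_r.
    rewrite (eq_bigr (fun i0 : 'I_n => c (inl i0) (inr (Ordinal hj)))) //.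
    by move=> x _; case: (Hc (inl x) (inr (Ordinal hj)) isT) => ->.
- case=> M [H1 H2 H3 H4]; exists (cof M); split.
  + by case=> [i|j] [i'|j'] //= _; split => //; apply: H1.
  + case=> [i|j] a.
    * rewrite (card_l (fun u => cof M (inl i) u == a)) deg_l.
      rewrite (_ : [set j : 'I_m | cof M (inl i) (inr j) == a] = [set j : 'I_m | M i j == a]) //.
      by rewrite (card_ord_iota m (fun j => M i j == a)); apply: H2.
    * rewrite (card_r (fun u => cof M (inr j) u == a)) deg_r.
      rewrite (_ : [set i : 'I_n | cof M (inr j) (inl i) == a] = [set i : 'I_n | M i j == a]) //.
      by rewrite (card_ord_iota n (fun i => M i j == a)); apply: H3.
  + case=> [i|j] [i'|j'] //= _.
    * rewrite sigma_l sigma_r /=.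
      rewrite (sum_ord_iota m (M i)) (sum_ord_iota n (fun x => M x j')).
      exact: H4.
    * rewrite sigma_l sigma_r /=.
      rewrite (sum_ord_iota m (M i')) (sum_ord_iota n (fun x => M x j)).
      by move=> E; apply: (H4 i' j) => //; rewrite E.
Qed.


Definition GoodT k n m (M : nat -> nat -> nat) (Pr Pc : nat -> nat -> bool) :=
  [/\ (forall i j, i < n -> j < m -> 1 <= M i j <= k),
      (forall i a, i < n -> 2 * rcnt M m i a <= m),
      (forall j a, j < m -> 2 * ccnt M n j a <= n),
      (forall i, i < n -> Pr (rsum M m i) m) &
      (forall j, j < m -> Pc (csum M n j) n)].

Definition tr (M : nat -> nat -> nat) := fun i j => M j i.

Lemma GoodT_tr k n m M Pr Pc : GoodT k n m M Pr Pc -> GoodT k m n (tr M) Pc Pr.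
Proof. by case=> H1 H2 H3 H4 H5; split => // i j hi hj; apply: H1. Qed.

Lemma GoodP_tr k n m M : GoodP k n m M -> GoodP k m n (tr M).
Proof.
by case=> H1 H2 H3 H4; split => // [i j hi hj|i j hi hj E]; [apply: H1|apply: (H4 j i) => //; rewrite E].
Qed.

Lemma GoodT_P k n m M Pr Pc : GoodT k n m M Pr Pc ->
  (forall s1 s2, Pr s1 m -> Pc s2 n -> s1 <> s2) -> GoodP k n m M.
Proof.
case=> H1 H2 H3 H4 H5 H; split => // i j hi hj; apply: H; [exact: H4|exact: H5].
Qed.

Lemma GoodT_weak k n m M (Pr Pc Pr' Pc' : nat -> nat -> bool) : GoodT k n m M Pr Pc ->
  (forall s, Pr s m -> Pr' s m) -> (forall s, Pc s n -> Pc' s n) -> GoodT k n m M Pr' Pc'.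
Proof.
case=> H1 H2 H3 H4 H5 h1 h2; split => //; [move=> i hi; apply: h1; exact: H4|move=> j hj; apply: h2; exact: H5].
Qed.

Lemma GoodP_mono k k' n m M : GoodP k n m M -> k <= k' -> GoodP k' n m M.
Proof.
case=> H1 H2 H3 H4 hk; split => // i j hi hj; have := H1 i j hi hj; lia.
Qed.

Definition hcat (A : nat -> nat -> nat) m1 (B : nat -> nat -> nat) :=
  fun i j => if j < m1 then A i j else B i (j - m1).

Lemma iota_shift m1 m2 : iota m1 m2 = map (addn m1) (iota 0 m2).
Proof. by rewrite -iotaDl addn0. Qed.

Lemma rcnt_hcat A B m1 m2 i a :
  rcnt (hcat A m1 B) (m1 + m2) i a = rcnt A m1 i a + rcnt B m2 i a.
Proof.
rewrite /rcnt iotaD count_cat add0n (iota_shift m1 m2) count_map; congr (_ + _).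
  by apply: eq_in_count => j; rewrite mem_iota add0n /hcat => /andP [_ ->].
by apply: eq_count => j; rewrite /hcat /= ltnNge leq_addr /= addKn.
Qed.

Lemma rsum_hcat A B m1 m2 i :
  rsum (hcat A m1 B) (m1 + m2) i = rsum A m1 i + rsum B m2 i.
Proof.
rewrite /rsum iotaD map_cat sumn_cat add0n (iota_shift m1 m2) -map_comp; congr (_ + _).
  by congr sumn; apply/eq_in_map => j; rewrite mem_iota add0n /hcat => /andP [_ ->].
by congr sumn; apply: eq_map => j; rewrite /hcat /= ltnNge leq_addr /= addKn.
Qed.

Lemma hcatG k n m1 m2 A B (Pr1 Pr2 Pr Pc : nat -> nat -> bool) :
  GoodT k n m1 A Pr1 Pc -> GoodT k n m2 B Pr2 Pc ->
  (forall s1 s2, Pr1 s1 m1 -> Pr2 s2 m2 -> Pr (s1 + s2) (m1 + m2)) ->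
  GoodT k n (m1 + m2) (hcat A m1 B) Pr Pc.
Proof.
case=> A1 A2 A3 A4 A5 [B1 B2 B3 B4 B5] H; split.
- move=> i j hi hj; rewrite /hcat; case: (ltnP j m1) => hj1; first exact: A1.
  apply: B1 => //; lia.
- move=> i a hi; rewrite rcnt_hcat; have := A2 i a hi; have := B2 i a hi; lia.
- move=> j a hj; case: (ltnP j m1) => hj1.
  + have := A3 j a hj1; congr (_ <= _); congr (_ * _).
    by rewrite /ccnt /hcat hj1.
  + have : j - m1 < m2 by lia.
    move=> /(B3 _ a); congr (_ <= _); congr (_ * _).
    by rewrite /ccnt /hcat ltnNge hj1.
- by move=> i hi; rewrite rsum_hcat; apply: H; [exact: A4|exact: B4].
- move=> j hj; case: (ltnP j m1) => hj1.
  + by have := A5 j hj1; rewrite /csum /hcat hj1.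
  + have : j - m1 < m2 by lia.
    by move=> /B5; rewrite /csum /hcat ltnNge hj1.
Qed.

Definition vcat (A : nat -> nat -> nat) n1 (B : nat -> nat -> nat) := tr (hcat (tr A) n1 (tr B)).

Lemma vcatG k n1 n2 m A B (Pr Pc1 Pc2 Pc : nat -> nat -> bool) :
  GoodT k n1 m A Pr Pc1 -> GoodT k n2 m B Pr Pc2 ->
  (forall s1 s2, Pc1 s1 n1 -> Pc2 s2 n2 -> Pc (s1 + s2) (n1 + n2)) ->
  GoodT k (n1 + n2) m (vcat A n1 B) Pr Pc.
Proof.
move=> /GoodT_tr hA /GoodT_tr hB H; apply: GoodT_tr; exact: hcatG hA hB H.
Qed.

Fixpoint hrep (T : nat -> nat -> nat) w c : nat -> nat -> nat :=
  if c is c'.+1 then hcat T w (hrep T w c') else (fun _ _ => 0).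

Lemma hrepG k n w T c (Pr Pc : nat -> nat -> bool) :
  GoodT k n w T Pr Pc -> Pr 0 0 ->
  (forall s1 s2 l, Pr s1 w -> Pr s2 l -> Pr (s1 + s2) (w + l)) ->
  GoodT k n (c * w) (hrep T w c) Pr Pc.
Proof.
move=> hT h0 hc; elim: c => [|c IH] /=.
  split => //; by move=> i a hi; rewrite /rcnt.
rewrite mulSn; apply: hcatG hT IH _ => s1 s2; exact: hc.
Qed.

Definition vrep (T : nat -> nat -> nat) h c := tr (hrep (tr T) h c).

Lemma vrepG k m h T c (Pr Pc : nat -> nat -> bool) :
  GoodT k h m T Pr Pc -> Pc 0 0 ->
  (forall s1 s2 l, Pc s1 h -> Pc s2 l -> Pc (s1 + s2) (h + l)) ->
  GoodT k (c * h) m (vrep T h c) Pr Pc.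
Proof.
move=> /GoodT_tr hT h0 hc; apply: GoodT_tr; exact: hrepG.
Qed.


Lemma mem_iota0 j m : (j \in iota 0 m) = (j < m).
Proof. by rewrite mem_iota. Qed.

Definition mx (s : seq (seq nat)) : nat -> nat -> nat := fun i j => nth 0 (nth [::] s i) j.

Definition chkT k n m (M : nat -> nat -> nat) (pr pc : nat -> nat -> bool) :=
  [&& all (fun i => all (fun j => (1 <= M i j <= k)) (iota 0 m)) (iota 0 n),
      all (fun i => all (fun a => 2 * rcnt M m i a <= m) (iota 0 k.+1)) (iota 0 n),
      all (fun j => all (fun a => 2 * ccnt M n j a <= n) (iota 0 k.+1)) (iota 0 m),
      all (fun i => pr (rsum M m i) m) (iota 0 n) &
      all (fun j => pc (csum M n j) n) (iota 0 m)].

Definition chkP k n m M :=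
  chkT k n m M (fun _ _ => true) (fun _ _ => true) &&
  all (fun i => all (fun j => rsum M m i != csum M n j) (iota 0 m)) (iota 0 n).

Lemma rcnt_big k m M i a : (forall j, j < m -> M i j <= k) -> k < a -> rcnt M m i a = 0.
Proof.
move=> H ha; rewrite /rcnt (@eq_in_count _ _ pred0) ?count_pred0 // => j.
rewrite mem_iota0 => hj; have := H j hj; apply: contraTF => /eqP ->; lia.
Qed.

Lemma ccnt_big k n M j a : (forall i, i < n -> M i j <= k) -> k < a -> ccnt M n j a = 0.
Proof. exact: (@rcnt_big k n (tr M) j a). Qed.

Lemma chkT_ok k n m M pr pc : chkT k n m M pr pc -> GoodT k n m M pr pc.
Proof.
case/and5P => /allP H1 /allP H2 /allP H3 /allP H4 /allP H5.
have R : forall i j, i < n -> j < m -> 1 <= M i j <= k.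
  move=> i j hi hj; have := H1 i; rewrite mem_iota0 => /(_ hi) /allP /(_ j).
  by rewrite mem_iota0; apply.
split => //.
- move=> i a hi; case: (leqP a k) => ha.
    have := H2 i; rewrite mem_iota0 => /(_ hi) /allP /(_ a); rewrite mem_iota0; apply; lia.
  rewrite (@rcnt_big k) // => j hj; have := R i j hi hj; lia.
- move=> j a hj; case: (leqP a k) => ha.
    have := H3 j; rewrite mem_iota0 => /(_ hj) /allP /(_ a); rewrite mem_iota0; apply; lia.
  rewrite (@ccnt_big k) // => i hi; have := R i j hi hj; lia.
- by move=> i hi; apply: H4; rewrite mem_iota0.
- by move=> j hj; apply: H5; rewrite mem_iota0.
Qed.

Lemma chkP_ok k n m M : chkP k n m M -> GoodP k n m M.
Proof.
case/andP => /chkT_ok [H1 H2 H3 _ _] /allP H; split => // i j hi hj.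
have := H i; rewrite mem_iota0 => /(_ hi) /allP /(_ j); rewrite mem_iota0 => /(_ hj) /eqP //.
Qed.

Lemma chkP_complete k n m M : GoodP k n m M -> chkP k n m M.
Proof.
case=> H1 H2 H3 H4; apply/andP; split; last first.
  apply/allP => i; rewrite mem_iota0 => hi; apply/allP => j; rewrite mem_iota0 => hj.
  by apply/eqP; apply: H4.
apply/and5P; split.
- apply/allP => i; rewrite mem_iota0 => hi; apply/allP => j; rewrite mem_iota0 => hj.
  exact: H1.
- apply/allP => i; rewrite mem_iota0 => hi; apply/allP => a _; exact: H2.
- apply/allP => j; rewrite mem_iota0 => hj; apply/allP => a _; exact: H3.
- by apply/allP.
- by apply/allP.
Qed.

Lemma GoodP_ext k n m M M' : (forall i j, i < n -> j < m -> M i j = M' i j) ->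
  GoodP k n m M -> GoodP k n m M'.
Proof.
move=> E [H1 H2 H3 H4].
have Er : forall i a, i < n -> rcnt M m i a = rcnt M' m i a.
  move=> i a hi; apply: eq_in_count => j; rewrite mem_iota0 => hj; by rewrite E.
have Ec : forall j a, j < m -> ccnt M n j a = ccnt M' n j a.
  move=> j a hj; apply: eq_in_count => i; rewrite mem_iota0 => hi; by rewrite E.
have Sr : forall i, i < n -> rsum M m i = rsum M' m i.
  move=> i hi; rewrite /rsum; congr sumn; apply/eq_in_map => j; rewrite mem_iota0 => hj; by rewrite E.
have Sc : forall j, j < m -> csum M n j = csum M' n j.
  move=> j hj; rewrite /csum; congr sumn; apply/eq_in_map => i; rewrite mem_iota0 => hi; by rewrite E.
split.
- by move=> i j hi hj; rewrite -E //; apply: H1.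
- by move=> i a hi; rewrite -Er //; apply: H2.
- by move=> j a hj; rewrite -Ec //; apply: H3.
- by move=> i j hi hj; rewrite -Sr // -Sc //; apply: H4.
Qed.


Definition D0 (s l : nat) := s == 2 * l.
Definition D1 (s l : nat) := (2 * l <= s + 1) && (s <= 2 * l + 1).
Definition NZ (s l : nat) := s != 2 * l.
Definition T2 (s l : nat) := 2 * s == 3 * l.
Definition Dp f := if f == 2 then D1 else D0.

Definition Z2 := mx [:: [:: 1; 2]; [:: 2; 1]].
Definition Z22 := mx [:: [:: 1; 3]; [:: 3; 1]].
Definition Z33 := mx [:: [:: 1; 2; 3]; [:: 2; 3; 1]; [:: 3; 1; 2]].
Definition Y23 := mx [:: [:: 1; 2; 3]; [:: 3; 1; 2]].
Definition Y32 := mx [:: [:: 1; 3]; [:: 2; 1]; [:: 3; 2]].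
Definition Z34 := mx [:: [:: 1; 3; 3; 1]; [:: 2; 1; 2; 3]; [:: 3; 2; 1; 2]].
Definition Z43 := mx [:: [:: 1; 2; 3]; [:: 3; 1; 2]; [:: 3; 2; 1]; [:: 1; 3; 2]].
Definition Z24 := mx [:: [:: 1; 3; 1; 3]; [:: 3; 1; 3; 1]].
Definition Z42 := mx [:: [:: 1; 3]; [:: 3; 1]; [:: 1; 3]; [:: 3; 1]].
Definition Z44 := mx [:: [:: 1; 3; 1; 3]; [:: 3; 1; 3; 1]; [:: 1; 3; 1; 3]; [:: 3; 1; 3; 1]].
Definition S43 := mx [:: [:: 1; 2; 3]; [:: 1; 3; 2]; [:: 2; 1; 3]; [:: 2; 3; 1]].
Definition S44 := mx [:: [:: 2; 2; 1; 3]; [:: 1; 3; 2; 2]; [:: 2; 2; 1; 3]; [:: 1; 3; 2; 2]].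

Definition T3 f := if f == 2 then Y32 else if f == 4 then Z34 else mx [::].
Definition Te e := if e == 2 then Y23 else if e == 4 then Z43 else mx [::].
Definition Tef e f :=
  if (e == 2) && (f == 2) then Z22 else if (e == 2) && (f == 4) then Z24
  else if (e == 4) && (f == 2) then Z42 else if (e == 4) && (f == 4) then Z44 else mx [::].

Lemma Z2_ok : GoodT 2 2 2 Z2 T2 T2. Proof. by apply: chkT_ok; vm_compute. Qed.
Lemma Z33_ok : GoodT 3 3 3 Z33 D0 D0. Proof. by apply: chkT_ok; vm_compute. Qed.
Lemma S43_ok : GoodT 3 4 3 S43 D0 NZ. Proof. by apply: chkT_ok; vm_compute. Qed.
Lemma S44_ok : GoodT 3 4 4 S44 D0 NZ. Proof. by apply: chkT_ok; vm_compute. Qed.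
Lemma Z34_ok : GoodT 3 3 4 Z34 D0 D0. Proof. by apply: chkT_ok; vm_compute. Qed.
Lemma Z43_ok : GoodT 3 4 3 Z43 D0 D0. Proof. by apply: chkT_ok; vm_compute. Qed.
Lemma Z44_ok : GoodT 3 4 4 Z44 D0 D0. Proof. by apply: chkT_ok; vm_compute. Qed.

Definition E024 e := [|| e == 0, e == 2 | e == 4].

Lemma T3_ok f : E024 f -> GoodT 3 3 f (T3 f) (Dp f) D0.
Proof. by case/or3P => /eqP ->; apply: chkT_ok; vm_compute. Qed.
Lemma Te_ok e : E024 e -> GoodT 3 e 3 (Te e) D0 (Dp e).
Proof. by case/or3P => /eqP ->; apply: chkT_ok; vm_compute. Qed.
Lemma Tef_ok e f : E024 e -> E024 f -> GoodT 3 e f (Tef e f) D0 (Dp e).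
Proof. by case/or3P => /eqP -> /or3P [] /eqP ->; apply: chkT_ok; vm_compute. Qed.

Definition E22 := mx [:: [:: 1; 2]; [:: 3; 4]].
Definition E33 := mx [:: [:: 2; 3; 5]; [:: 1; 4; 2]; [:: 5; 1; 4]].
Definition E55 := mx [:: [:: 1; 3; 2; 4; 1]; [:: 2; 2; 4; 3; 4]; [:: 3; 1; 1; 2; 2]; [:: 4; 3; 4; 1; 3]; [:: 4; 4; 3; 2; 3]].
Definition E66 := mx [:: [:: 1; 1; 1; 3; 3; 2]; [:: 1; 1; 1; 3; 3; 2]; [:: 1; 1; 1; 3; 3; 2]; [:: 3; 3; 3; 2; 2; 1]; [:: 3; 3; 3; 2; 2; 1]; [:: 3; 3; 3; 2; 2; 1]].
Definition E99 := mx [:: [:: 2; 2; 2; 2; 1; 1; 1; 3; 3]; [:: 2; 2; 2; 2; 1; 1; 1; 3; 3]; [:: 2; 2; 2; 2; 1; 1; 1; 3; 3]; [:: 2; 2; 2; 2; 1; 1; 1; 3; 3]; [:: 1; 1; 1; 1; 3; 3; 3; 2; 2]; [:: 1; 1; 1; 1; 3; 3; 3; 2; 2]; [:: 1; 1; 1; 1; 3; 3; 3; 2; 2]; [:: 1; 1; 1; 1; 3; 3; 3; 2; 2]; [:: 3; 3; 3; 3; 2; 2; 2; 1; 1]].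

Lemma E22_ok : GoodP 4 2 2 E22. Proof. by apply: chkP_ok; vm_compute. Qed.
Lemma E33_ok : GoodP 5 3 3 E33. Proof. by apply: chkP_ok; vm_compute. Qed.
Lemma E55_ok : GoodP 4 5 5 E55. Proof. by apply: chkP_ok; vm_compute. Qed.
Lemma E66_ok : GoodP 3 6 6 E66. Proof. by apply: chkP_ok; vm_compute. Qed.
Lemma E99_ok : GoodP 3 9 9 E99. Proof. by apply: chkP_ok; vm_compute. Qed.


Lemma cl_D0 s1 l1 s2 l2 : D0 s1 l1 -> D0 s2 l2 -> D0 (s1 + s2) (l1 + l2).
Proof. rewrite /D0 => /eqP h1 /eqP h2; apply/eqP; lia. Qed.
Lemma cl_D0p f s1 l1 s2 l2 : D0 s1 l1 -> Dp f s2 l2 -> Dp f (s1 + s2) (l1 + l2).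
Proof. rewrite /Dp /D0 /D1; case: (f == 2) => /eqP h1; [move=> /andP [h2 h3]; apply/andP; split|move=> /eqP h2; apply/eqP]; lia. Qed.
Lemma D0_Dp f s l : D0 s l -> Dp f s l.
Proof. rewrite /Dp /D0 /D1; case: (f == 2) => // /eqP h; apply/andP; split; lia. Qed.
Lemma cl_NZ s1 l1 s2 l2 : NZ s1 l1 -> D0 s2 l2 -> NZ (s1 + s2) (l1 + l2).
Proof. rewrite /NZ /D0 => h1 /eqP h2; apply/negP => /eqP h3; move/negP: h1; apply; apply/eqP; lia. Qed.
Lemma cl_T2 s1 l1 s2 l2 : T2 s1 l1 -> T2 s2 l2 -> T2 (s1 + s2) (l1 + l2).
Proof. rewrite /T2 => /eqP h1 /eqP h2; apply/eqP; lia. Qed.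

Lemma dec3 n : 2 <= n -> exists b e, E024 e /\ n = b * 3 + e.
Proof.
move=> hn; have := divn_eq n 3; have := ltn_pmod n (isT : 0 < 3).
case E: (n %% 3) => [|[|[|r]]] // _ h.
- by exists (n %/ 3), 0; split => //; lia.
- by exists (n %/ 3 - 1), 4; split => //; lia.
- by exists (n %/ 3), 2; split => //; lia.
Qed.

Lemma dec34 n : n != 1 -> n != 2 -> n != 5 -> exists x y, n = x * 3 + y * 4.
Proof.
move=> h1 h2 h5; have := divn_eq n 3; have := ltn_pmod n (isT : 0 < 3).
case E: (n %% 3) => [|[|[|r]]] // _ h.
- by exists (n %/ 3), 0; lia.
- by exists (n %/ 3 - 1), 1; lia.
- by exists (n %/ 3 - 2), 2; lia.
Qed.

Lemma Dp_P f s l : Dp f s l -> (f = 2 /\ 2*l <= s+1 /\ s <= 2*l+1) \/ (f <> 2 /\ s = 2*l).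
Proof.
rewrite /Dp /D1 /D0; case: eqP => [->|hf]; [move=> /andP [h1 h2]; left|move=> /eqP h; right]; done.
Qed.
Lemma E024_P e : E024 e -> e = 0 \/ e = 2 \/ e = 4.
Proof. by case/or3P => /eqP ->; auto. Qed.
Lemma nsd_arith e f b d s1 s2 : E024 e -> E024 f -> b*3+e <> d*3+f ->
  Dp f s1 (d*3+f) -> Dp e s2 (b*3+e) -> s1 <> s2.
Proof.
move=> /E024_P he /E024_P hf hne /Dp_P h1 /Dp_P h2.
case: he => [E1|[E1|E1]]; case: hf => [E2|[E2|E2]]; subst e f; lia.
Qed.

Lemma fam_neq n m : 2 <= n -> 2 <= m -> n <> m -> exists M, GoodP 3 n m M.
Proof.
move=> hn hm hnm; have [b [e [he En]]] := dec3 hn; have [d [f [hf Em]]] := dec3 hm.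
have top1 := hrepG d Z33_ok (isT : D0 0 0) (fun s1 s2 l => @cl_D0 s1 3 s2 l).
have top2 := hcatG top1 (T3_ok hf) (fun s1 s2 => @cl_D0p f s1 (d * 3) s2 f).
have top := vrepG b top2 (isT : D0 0 0) (fun s1 s2 l => @cl_D0 s1 3 s2 l).
have bot1 := hrepG d (Te_ok he) (isT : D0 0 0) (fun s1 s2 l => @cl_D0 s1 3 s2 l).
have bot2 := hcatG bot1 (Tef_ok he hf) (fun s1 s2 => @cl_D0 s1 (d * 3) s2 f).
have bot := GoodT_weak bot2 (fun s => @D0_Dp f s _) (fun s h => h).
have all := vcatG top bot (fun s1 s2 => @cl_D0p e s1 (b * 3) s2 e).
rewrite -En -Em in all.
eexists; apply: (GoodT_P all) => s1 s2; rewrite En Em.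
by apply: nsd_arith => //; rewrite -En -Em.
Qed.

Lemma fam_eq N : 4 <= N -> N != 5 -> N != 6 -> N != 9 ->
  exists M, GoodP 3 N N M.
Proof.
move=> h4 h5 h6 h9.
have h1 : N != 1 by lia.
have h2 : N != 2 by lia.
have [x [y EN]] := dec34 h1 h2 h5.
have [u [v EN4]] : exists u v, N - 4 = u * 3 + v * 4.
  apply: dec34; lia.
have t1 := hrepG x S43_ok (isT : D0 0 0) (fun s1 s2 l => @cl_D0 s1 3 s2 l).
have t2 := hrepG y S44_ok (isT : D0 0 0) (fun s1 s2 l => @cl_D0 s1 4 s2 l).
have top := hcatG t1 t2 (fun s1 s2 => @cl_D0 s1 (x * 3) s2 (y * 4)).
have a1 := hrepG x Z33_ok (isT : D0 0 0) (fun s1 s2 l => @cl_D0 s1 3 s2 l).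
have a2 := hrepG y Z34_ok (isT : D0 0 0) (fun s1 s2 l => @cl_D0 s1 4 s2 l).
have s3 := hcatG a1 a2 (fun s1 s2 => @cl_D0 s1 (x * 3) s2 (y * 4)).
have b1 := hrepG x Z43_ok (isT : D0 0 0) (fun s1 s2 l => @cl_D0 s1 3 s2 l).
have b2 := hrepG y Z44_ok (isT : D0 0 0) (fun s1 s2 l => @cl_D0 s1 4 s2 l).
have s4 := hcatG b1 b2 (fun s1 s2 => @cl_D0 s1 (x * 3) s2 (y * 4)).
have v3 := vrepG u s3 (isT : D0 0 0) (fun s1 s2 l => @cl_D0 s1 3 s2 l).
have v4 := vrepG v s4 (isT : D0 0 0) (fun s1 s2 l => @cl_D0 s1 4 s2 l).
have bot := vcatG v3 v4 (fun s1 s2 => @cl_D0 s1 (u * 3) s2 (v * 4)).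
have all := vcatG top bot (fun s1 s2 => @cl_NZ s1 4 s2 (u * 3 + v * 4)).
have E4 : 4 + (u * 3 + v * 4) = N by lia.
rewrite E4 -EN in all.
eexists; apply: (GoodT_P all) => s1 s2.
rewrite /D0 /NZ => /eqP -> /negP H E; apply: H; apply/eqP; lia.
Qed.

Lemma fam_even n m : 0 < n -> 0 < m -> ~~ odd n -> ~~ odd m -> n <> m -> exists M, GoodP 2 n m M.
Proof.
move=> hn hm en em hnm.
have En : n = n./2 * 2 by have := odd_double_half n; rewrite (negbTE en) -muln2 /=; lia.
have Em : m = m./2 * 2 by have := odd_double_half m; rewrite (negbTE em) -muln2 /=; lia.
have s := hrepG m./2 Z2_ok (isT : T2 0 0) (fun s1 s2 l => @cl_T2 s1 2 s2 l).
have all := vrepG n./2 s (isT : T2 0 0) (fun s1 s2 l => @cl_T2 s1 2 s2 l).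
rewrite -En -Em in all.
eexists; apply: (GoodT_P all) => s1 s2.
rewrite /T2 => /eqP h1 /eqP h2 E; subst; lia.
Qed.


Lemma seq_stats (f : nat -> nat) (s : seq nat) : (forall j, j \in s -> 1 <= f j <= 3) ->
  sumn (map f s) = count (fun j => f j == 1) s + 2 * count (fun j => f j == 2) s + 3 * count (fun j => f j == 3) s /\
  size s = count (fun j => f j == 1) s + count (fun j => f j == 2) s + count (fun j => f j == 3) s.
Proof.
elim: s => [|x s IH] H //=.
have [|h1 h2] := IH; first by move=> j hj; apply: H; rewrite inE hj orbT.
have := H x (mem_head _ _); case: (f x) => [|[|[|[|y]]]] //= _; lia.
Qed.

Lemma row_info k n m M i : GoodP k n m M -> k <= 3 -> i < n ->
  m = rcnt M m i 1 + rcnt M m i 2 + rcnt M m i 3 /\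
      rsum M m i = rcnt M m i 1 + 2 * rcnt M m i 2 + 3 * rcnt M m i 3 /\
      2 * rcnt M m i 1 <= m /\ 2 * rcnt M m i 2 <= m /\ 2 * rcnt M m i 3 <= m /\
      (k <= 2 -> rcnt M m i 3 = 0) /\ (k <= 1 -> rcnt M m i 2 = 0).
Proof.
case=> H1 H2 H3 H4 hk hi.
have R : forall j, j \in iota 0 m -> 1 <= M i j <= 3.
  by move=> j; rewrite mem_iota => /andP [_ hj]; have := H1 i j hi hj; lia.
have [S1 S2] := seq_stats R; rewrite size_iota in S2.
do 2 (split; first done).
do 3 (split; first exact: H2).
split => hk2; apply: (@rcnt_big k) => //; try lia; move=> j hj; have := H1 i j hi hj; lia.
Qed.

Lemma col_info k n m M j : GoodP k n m M -> k <= 3 -> j < m ->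
  n = ccnt M n j 1 + ccnt M n j 2 + ccnt M n j 3 /\
      csum M n j = ccnt M n j 1 + 2 * ccnt M n j 2 + 3 * ccnt M n j 3 /\
      2 * ccnt M n j 1 <= n /\ 2 * ccnt M n j 2 <= n /\ 2 * ccnt M n j 3 <= n /\
      (k <= 2 -> ccnt M n j 3 = 0) /\ (k <= 1 -> ccnt M n j 2 = 0).
Proof. move=> /GoodP_tr H hk hj; exact: (row_info H hk hj). Qed.

Lemma noK1 n m M : 0 < n -> 0 < m -> GoodP 1 n m M -> False.
Proof.
move=> hn hm H; have [h1 [h2 [h3 [h4 [h5 [h6 h7]]]]]] := row_info H isT hn.
have := h6 isT; have := h7 isT; lia.
Qed.

Lemma noK2_odd_m n m M : 0 < n -> odd m -> GoodP 2 n m M -> False.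
Proof.
move=> hn om H; have [h1 [h2 [h3 [h4 [h5 [h6 h7]]]]]] := row_info H isT hn.
have := odd_double_half m; rewrite om -muln2 => E.
have := h6 isT; lia.
Qed.

Lemma noK2_odd n m M : 0 < n -> 0 < m -> odd n || odd m -> GoodP 2 n m M -> False.
Proof.
move=> hn hm /orP [on|om] H; last exact: noK2_odd_m H.
exact: (noK2_odd_m hm on (GoodP_tr H)).
Qed.

Lemma noK2_eq N M : 0 < N -> GoodP 2 N N M -> False.
Proof.
move=> hN H; have [h1 [h2 [h3 [h4 [h5 [h6 h7]]]]]] := row_info H isT hN.
have [g1 [g2 [g3 [g4 [g5 [g6 g7]]]]]] := col_info H isT hN.
case: H => _ _ _ /(_ 0 0 hN hN); have := h6 isT; have := g6 isT; lia.
Qed.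

Lemma dc5 M x : rcnt M 5 0 x + rcnt M 5 1 x + rcnt M 5 2 x + rcnt M 5 3 x + rcnt M 5 4 x =
  ccnt M 5 0 x + ccnt M 5 1 x + ccnt M 5 2 x + ccnt M 5 3 x + ccnt M 5 4 x.
Proof. rewrite /rcnt /ccnt /=; lia. Qed.

Lemma no55 M : GoodP 3 5 5 M -> False.
Proof.
move=> H.
have [r01 [r02 [r03 [r04 [r05 _]]]]] := row_info H isT (isT : 0 < 5).
have [r11 [r12 [r13 [r14 [r15 _]]]]] := row_info H isT (isT : 1 < 5).
have [r21 [r22 [r23 [r24 [r25 _]]]]] := row_info H isT (isT : 2 < 5).
have [r31 [r32 [r33 [r34 [r35 _]]]]] := row_info H isT (isT : 3 < 5).
have [r41 [r42 [r43 [r44 [r45 _]]]]] := row_info H isT (isT : 4 < 5).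
have [c01 [c02 [c03 [c04 [c05 _]]]]] := col_info H isT (isT : 0 < 5).
have [c11 [c12 [c13 [c14 [c15 _]]]]] := col_info H isT (isT : 1 < 5).
have [c21 [c22 [c23 [c24 [c25 _]]]]] := col_info H isT (isT : 2 < 5).
have [c31 [c32 [c33 [c34 [c35 _]]]]] := col_info H isT (isT : 3 < 5).
have [c41 [c42 [c43 [c44 [c45 _]]]]] := col_info H isT (isT : 4 < 5).
case: H => _ _ _ N.
have n0 := N 0 0 isT isT; have n1 := N 0 1 isT isT; have n2 := N 0 2 isT isT.
have n3 := N 0 3 isT isT; have n4 := N 0 4 isT isT.
have d1 := dc5 M 1; have d2 := dc5 M 2; have d3 := dc5 M 3.
clear N.
lia.
Qed.


Lemma chk22 : all (fun a => all (fun b => all (fun c => all (fun d =>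
  ~~ chkP 3 2 2 (mx [:: [:: a; b]; [:: c; d]])) (iota 1 3)) (iota 1 3)) (iota 1 3)) (iota 1 3).
Proof. by vm_compute. Qed.

Lemma inI k x : 1 <= x <= k -> x \in iota 1 k.
Proof. by rewrite mem_iota; lia. Qed.

Lemma no22 M : GoodP 3 2 2 M -> False.
Proof.
move=> H; have [R _ _ _] := H.
have H' := GoodP_ext (M' := mx [:: [:: M 0 0; M 0 1]; [:: M 1 0; M 1 1]]) _ H.
have /chkP_complete : GoodP 3 2 2 (mx [:: [:: M 0 0; M 0 1]; [:: M 1 0; M 1 1]]).
  by apply: H' => [] [|[|i]] [|[|j]].
apply/negP.
move: chk22 => /allP /(_ _ (inI (R 0 0 isT isT))) /allP /(_ _ (inI (R 0 1 isT isT)))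
  /allP /(_ _ (inI (R 1 0 isT isT))) /allP /(_ _ (inI (R 1 1 isT isT))).
done.
Qed.

Lemma chk33 : all (fun a => all (fun b => all (fun c => all (fun d =>
  all (fun e => all (fun f => all (fun g => all (fun h => all (fun i =>
  ~~ chkP 4 3 3 (mx [:: [:: a; b; c]; [:: d; e; f]; [:: g; h; i]]))
  (iota 1 4)) (iota 1 4)) (iota 1 4)) (iota 1 4)) (iota 1 4)) (iota 1 4)) (iota 1 4)) (iota 1 4)) (iota 1 4).
Proof. by vm_compute. Qed.

Lemma no33 M : GoodP 4 3 3 M -> False.
Proof.
move=> H; have [R _ _ _] := H.
set M' := mx [:: [:: M 0 0; M 0 1; M 0 2]; [:: M 1 0; M 1 1; M 1 2]; [:: M 2 0; M 2 1; M 2 2]].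
have H' := GoodP_ext (M' := M') _ H.
have /chkP_complete : GoodP 4 3 3 M'.
  by apply: H' => [] [|[|[|i]]] [|[|[|j]]].
apply/negP.
move: chk33 => /allP /(_ _ (inI (R 0 0 isT isT))) /allP /(_ _ (inI (R 0 1 isT isT)))
  /allP /(_ _ (inI (R 0 2 isT isT))) /allP /(_ _ (inI (R 1 0 isT isT)))
  /allP /(_ _ (inI (R 1 1 isT isT))) /allP /(_ _ (inI (R 1 2 isT isT)))
  /allP /(_ _ (inI (R 2 0 isT isT))) /allP /(_ _ (inI (R 2 1 isT isT)))
  /allP /(_ _ (inI (R 2 2 isT isT))).
done.
Qed.


Lemma chi_of k n m : 0 < k -> (exists M, GoodP k n m M) ->
  (forall M, GoodP k.-1 n m M -> False) -> chi_mSigma_eq _ (Knm_adj n m) k.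
Proof.
move=> hk hup hlo; split; first by apply/has_iff.
move=> k' hk' /has_iff [M HM]; apply: (hlo M); apply: GoodP_mono HM _; lia.
Qed.

Theorem mainTheorem9 (n m : nat) (hn : 0 < n) (hm : 0 < m) :
  (~~ odd n && ~~ odd m ->
     (n = 2 /\ m = 2 -> chi_mSigma_eq _ (Knm_adj n m) 4) /\
     (n = m /\ 4 <= n -> chi_mSigma_eq _ (Knm_adj n m) 3) /\
     (n <> m -> chi_mSigma_eq _ (Knm_adj n m) 2)) /\
  (odd n || odd m -> 2 <= n -> 2 <= m ->
     (n = 3 /\ m = 3 -> chi_mSigma_eq _ (Knm_adj n m) 5) /\
     (n = 5 /\ m = 5 -> chi_mSigma_eq _ (Knm_adj n m) 4) /\
     (~ (n = 3 /\ m = 3) /\ ~ (n = 5 /\ m = 5) -> chi_mSigma_eq _ (Knm_adj n m) 3)).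
Proof.
split.
- move=> /andP [en em]; split; [|split].
  + case=> -> ->; apply: chi_of => //; first by exists E22; exact: E22_ok.
    exact: no22.
  + case=> E h4; subst m; apply: chi_of => //; last by move=> M /(noK2_eq hn).
    case: (n =P 6) => [->|h6]; first by exists E66; exact: E66_ok.
    apply: fam_eq => //; apply/eqP => E; subst n => //.
  + move=> hnm; apply: chi_of => //; last by move=> M /(noK1 hn hm).
    exact: fam_even.
- move=> hodd h2n h2m; split; [|split].
  + case=> -> ->; apply: chi_of => //; first by exists E33; exact: E33_ok.
    exact: no33.
  + case=> -> ->; apply: chi_of => //; first by exists E55; exact: E55_ok.
    exact: no55.
  + case=> h33 h55; apply: chi_of => //; last by move=> M /(noK2_odd hn hm hodd).
    case: (n =P m) => [E|hnm]; last exact: fam_neq.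
    subst m; rewrite orbb in hodd.
    case: (n =P 9) => [->|h9]; first by exists E99; exact: E99_ok.
    have h3 : n != 3 by apply/eqP => E; subst n; apply: h33.
    have h5 : n != 5 by apply/eqP => E; subst n; apply: h55.
    have h6 : n != 6 by apply/eqP => E; subst n.
    have h2 : n != 2 by apply/eqP => E; subst n.
    have h4 : 4 <= n by lia.
    by apply: fam_eq => //; apply/eqP.
Qed.
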